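(* Let $n$ be a positive integer and let $D_{2n}=\langle a,x\mid a^n=e,\ x^2=e,\ xax=a^{-1}\rangle$ be the dihedral group of order $2n$. Then: (1) For every positive integer $m$ with $m\mid n$ and $\gcd(m,\tfrac nm)=1$, $D_{2n}\simeq\mathbb{Z}_m\rtimes_\varphi D_{2n/m}$, where, writing $D_{2n/m}=\langle a,x\mid a^{n/m}=e,x^2=e,xax=a^{-1}\rangle$, the homomorphism $\varphi\colon D_{2n/m}\to\mathrm{Aut}(\mathbb{Z}_m)$ is given by $\varphi(a)(1)=1$ and $\varphi(x)(1)=-1$. (2) If $n$ is even, then $D_{2n}\simeq D_n\rtimes_\varphi\mathbb{Z}_2$, where, writing $D_n=\langle a,x\mid a^{n/2}=e,x^2=e,xax=a^{-1}\rangle$, $\varphi(1)$ is the automorphism of $D_n$ with $\varphi(1)(a)=a^{-1}$ and $\varphi(1)(x)=ax$. (3) If $2\mid n$ and $4\nmid n$, then $D_{2n}\simeq D_n\times\mathbb{Z}_2$. (4) If $D_{2n}\simeq X\rtimes Y$ for some groups $X,Y$ with $|X|>1$, $|Y|>1$ and some semidirect product structure, then either (a) $X\simeq\mathbb{Z}_m$ and $Y\simeq D_{2n/m}$ for some $m\mid n$ with $\gcd(m,\tfrac nm)=1$, or (b) $2\mid n$, $X\simeq D_n$ and $Y\simeq\mathbb{Z}_2$.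
   Context: $D_{2k}$ denotes the dihedral group of order $2k$ (so $D_2\simeq\mathbb{Z}_2$, $D_4\simeq\mathbb{Z}_2\times\mathbb{Z}_2$). $\mathbb{Z}_m=\langle 1\rangle$ is the cyclic group of order $m$ written additively. For groups $N,H$ and a homomorphism $\varphi\colon H\to\mathrm{Aut}(N)$, $N\rtimes_\varphi H$ is $N\times H$ with product $(n_1,h_1)(n_2,h_2)=(n_1\varphi(h_1)(n_2),h_1h_2)$; a direct product counts as a semidirect product with trivial $\varphi$. *)

(* Defs.v *)
From HB Require Import structures.
From mathcomp Require Import all_boot all_order all_algebra.
From mathcomp Require Import fingroup morphism perm automorphism gproduct.
Set Implicit Arguments.
Unset Strict Implicit.
Unset Printing Implicit Defensive.
Import GRing.Theory.

(* Z_m : the cyclic group of order m (m >= 1), written additively.     *)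
(* It is the additive group of 'I_m (mathcomp's Z/mZ on ordinals);     *)
(* for m >= 1, 'I_(m.-1).+1 is literally 'I_m.                         *)
(* Its canonical generator "1" is Zp1.                                  *)
Definition Zmod (m : nat) : finGroupType := 'I_(m.-1).+1.

(* D_{2k} : the dihedral group of order 2k (k >= 1), concretely        *)
(* elements (i, s) standing for a^i x^s, i in Z_k, s in {0,1}, with     *)
(* (i,s)(j,t) = (i + (-1)^s j, s+t).                                    *)
Section Dihedral.
Variable k : nat.
Local Notation Zk := 'I_(k.-1).+1.

Definition dihedral : predArgType := (Zk * bool)%type.
HB.instance Definition _ := Finite.on dihedral.

Definition dih_mul (u v : dihedral) : dihedral :=
  ((u.1 + (if u.2 then - v.1 else v.1))%R, u.2 (+) v.2).
Definition dih_one : dihedral := (0%R, false).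
Definition dih_inv (u : dihedral) : dihedral :=
  ((if u.2 then u.1 else - u.1)%R, u.2).

Lemma dih_mulA : associative dih_mul.
Proof.
move=> [i s] [j t] [l r]; rewrite /dih_mul /=.
congr pair; last by rewrite addbA.
case: s; case: t => /=.
all: by rewrite ?opprD ?opprK addrA.
Qed.

Lemma dih_mul1 : left_id dih_one dih_mul.
Proof. by move=> [i s]; rewrite /dih_mul /= add0r. Qed.

Lemma dih_mulV : left_inverse dih_one dih_inv dih_mul.
Proof.
move=> [i s]; rewrite /dih_mul /dih_one /=; case: s => /=.
  by rewrite subrr.
by rewrite addNr.
Qed.

HB.instance Definition _ := Finite_isGroup.Build dihedral dih_mulA dih_mul1 dih_mulV.

Definition dih_a : dihedral := (Zp1, false).
Definition dih_x : dihedral := (0%R, true).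

End Dihedral.

(* External semidirect product N ⋊_φ H for a homomorphism             *)
(* φ : H -> Aut(N): each φ h is a bijective group morphism of N, and   *)
(* φ (h1 h2) = φ h1 ∘ φ h2.                                            *)
Record sdaction (N H : finGroupType) := SdAction {
  sdact :> H -> N -> N;
  sdact_morph : forall h, {morph sdact h : x y / (x * y)%g};
  sdact_bij : forall h, bijective (sdact h);
  sdact_mul : forall h1 h2 x, sdact (h1 * h2)%g x = sdact h1 (sdact h2 x)
}.

(* the carrier of N ⋊_φ H : pairs (n, h); depends on φ through its instances *)
Definition semidirect (N H : finGroupType) (phi : sdaction N H) : predArgType :=
  (N * H)%type.

Section SemiDirect.
Variables (N H : finGroupType) (phi : sdaction N H).
Local Open Scope group_scope.

Lemma sdact1g (x : N) : phi 1 x = x.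
Proof.
have [g phiK Kphi] := sdact_bij phi 1.
by rewrite -[x in RHS]Kphi -[in RHS](mulg1 1) sdact_mul Kphi.
Qed.

Lemma sdact_1 (h : H) : phi h 1 = 1.
Proof.
have /(congr1 (fun y => y * (phi h 1)^-1)) := sdact_morph phi h 1 1.
by rewrite mulg1 mulgK => <-; rewrite mulgV.
Qed.

Lemma sdact_inv (h : H) (x : N) : phi h x^-1 = (phi h x)^-1.
Proof.
apply/eqP; rewrite eq_sym eq_invg_mul -sdact_morph mulgV; exact/eqP/sdact_1.
Qed.

Local Notation sdT := (semidirect phi).
HB.instance Definition _ := Finite.on sdT.

Definition sd_mul (u v : sdT) : sdT :=
  (u.1 * phi u.2 v.1, u.2 * v.2).
Definition sd_one : sdT := (1, 1).
Definition sd_inv (u : sdT) : sdT :=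
  (phi u.2^-1 u.1^-1, u.2^-1).

Lemma sd_mulA : associative sd_mul.
Proof.
move=> [a h] [b g] [c f]; rewrite /sd_mul /=.
by rewrite sdact_morph sdact_mul !mulgA.
Qed.

Lemma sd_mul1 : left_id sd_one sd_mul.
Proof. by move=> [a h]; rewrite /sd_mul /= sdact1g !mul1g. Qed.

Lemma sd_mulV : left_inverse sd_one sd_inv sd_mul.
Proof.
move=> [a h]; rewrite /sd_mul /sd_inv /sd_one /=.
by rewrite -sdact_morph !mulVg sdact_1.
Qed.

HB.instance Definition _ := Finite_isGroup.Build sdT sd_mulA sd_mul1 sd_mulV.

End SemiDirect.

(* Main.v *)
Require Import Defs.
From HB Require Import structures.
From mathcomp Require Import all_boot all_order all_algebra all_fingroup all_solvable.
Import GRing.Theory.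
Local Open Scope group_scope.

Lemma valD (p : nat) (i j : 'I_p.+1) : nat_of_ord (i + j)%R = (i + j) %% p.+1.
Proof. by []. Qed.
Lemma valN (p : nat) (j : 'I_p.+1) : nat_of_ord (- j)%R = (p.+1 - j) %% p.+1.
Proof. by []. Qed.
Lemma valM (p : nat) (i j : 'I_p.+1) : val (i * j) = (i + j) %% p.+1.
Proof. by []. Qed.
Lemma valV (p : nat) (j : 'I_p.+1) : val (j^-1) = (p.+1 - j) %% p.+1.
Proof. by []. Qed.

Lemma inj_isog (G H : finGroupType) (K : {group H}) (f : G -> H) :
  {morph f : x y / x * y} -> injective f -> (forall x, f x \in K) ->
  #|G| = #|K| -> [set: G] \isog K.
Proof.
move=> fM finj fK cG.
have fM' : {in [set: G] &, {morph f : x y / x * y}} by move=> x y _ _; exact: fM.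
have inj : 'injm (Morphism fM') by apply/injmP => x y _ _; exact: finj.
apply/isogP; exists (Morphism fM') => //.
apply/eqP; rewrite eqEcard; apply/andP; split.
  by apply/subsetP => y /morphimP [x _ _ ->]; exact: fK.
by rewrite card_injm // cardsT cG.
Qed.

Lemma expV_sub (G : finGroupType) (r : G) (K j : nat) : r ^+ K = 1 -> j <= K ->
  r ^+ (K - j) = (r ^+ j)^-1.
Proof.
move=> rK jK; apply/eqP; by rewrite eq_mulgV1 invgK -expgD subnK // rK eqxx.
Qed.

Lemma dih_isog (G : finGroupType) (H : {group G}) (k : nat) (r s : G) :
  #[r] = (k.-1).+1 -> s * s = 1 -> s * r * s = r^-1 -> r \in H -> s \in H ->
  s \notin <[r]> -> #|H| = ((k.-1).+1).*2 -> [set: dihedral k] \isog H.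
Proof.
set K := (k.-1).+1 => ordr ss srs rH sH snr cH.
have rK : r ^+ K = 1 by rewrite -ordr expg_order.
have sV : s^-1 = s by apply/eqP; rewrite eq_invg_mul ss.
have srj j : s * r ^+ j = r ^- j * s.
  have : (r ^+ j) ^ s = (r ^- j).
    by rewrite conjXg /conjg sV mulgA srs expgVn.
  by rewrite /conjg sV => <-; rewrite -!mulgA ss mulg1.
pose f (u : dihedral k) := r ^+ (val u.1) * (if u.2 then s else 1).
apply: (@inj_isog _ _ H f).
- move=> [i b] [j c]; rewrite /f /= /dih_mul /=.
  case: b => /=.
    rewrite (expg_mod _ rK) expgD (expg_mod _ rK) expV_sub //; last exact: ltnW.
    rewrite -!mulgA (mulgA s) srj -!mulgA; congr (_ * (_ * _)).
    by case: c; rewrite ?mulg1 ?ss.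
  by rewrite (expg_mod _ rK) expgD mulg1 mulgA.
- have inj_r (i j : 'I_K) : r ^+ i = r ^+ j -> i = j.
    by move/eqP; rewrite eq_expg_mod_order ordr !modn_small // => /eqP/val_inj.
  have nin (i j : nat) : r ^+ i * s <> r ^+ j.
    move=> E; case/negP: snr.
    have -> : s = (r ^+ i)^-1 * r ^+ j by rewrite -E mulKg.
    by rewrite groupM ?groupV ?mem_cycle.
  move=> [i b] [j c]; rewrite /f /=.
  case: b; case: c; rewrite ?mulg1 => E.
  + by rewrite (inj_r _ _ (mulIg _ _ _ E)).
  + by case: (nin _ _ E).
  + by case: (nin _ _ (esym E)).
  + by rewrite (inj_r _ _ E).
- by move=> [i b]; rewrite /f; case: b; rewrite groupM ?groupX.
- by rewrite cH card_prod card_ord card_bool muln2.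
Qed.

Section DihBasics.
Variable k : nat.
Local Notation K := (k.-1).+1.
Local Notation a := (dih_a k).

Lemma dih_mulE (i j : 'I_K) (b c : bool) :
  ((i, b) : dihedral k) * (j, c) = ((i + (if b then - j else j))%R, b (+) c).
Proof. by []. Qed.

Lemma dih_invE (i : 'I_K) (b : bool) :
  ((i, b) : dihedral k)^-1 = ((if b then i else - i)%R, b).
Proof. by []. Qed.

Lemma dih_oneE : (1 : dihedral k) = (0%R, false).
Proof. by []. Qed.

Lemma dih_aX j : a ^+ j = (inZp j, false).
Proof.
elim: j => [|j IH]; first by rewrite expg0 dih_oneE; congr pair; apply: val_inj; rewrite /= mod0n.
rewrite expgSr IH /dih_a dih_mulE /=; congr pair; apply/val_inj => /=.
by rewrite modnDm addn1.
Qed.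

Lemma dih_aX1 j : (a ^+ j == 1) = (K %| j).
Proof.
rewrite dih_aX dih_oneE xpair_eqE andbT /dvdn; apply/eqP/eqP.
  by move/(congr1 val).
by move=> h; apply/val_inj.
Qed.

Lemma order_dih_a : #[a] = K.
Proof.
apply/eqP; rewrite eqn_dvd order_dvdn dih_aX1 dvdnn /= -dih_aX1 expg_order eqxx //.
Qed.

Lemma dih_rotE : [set u : dihedral k | ~~ u.2] = <[a]>.
Proof.
apply/setP => -[i b]; rewrite inE /=; apply/idP/cycleP.
  by case: b => // _; exists i; rewrite dih_aX; congr pair; apply/val_inj; rewrite /= modn_small.
by case=> j; rewrite dih_aX => -[_ ->].
Qed.

Lemma dih_refl_inv (u : dihedral k) : u.2 -> u * u = 1.
Proof. by case: u => i [] //= _; rewrite dih_mulE dih_oneE subrr. Qed.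

Lemma dih_refl_conj (s r : dihedral k) : s.2 -> ~~ r.2 -> s * r * s = r^-1.
Proof.
case: s => i [] //; case: r => j [] // _ _.
by rewrite !dih_mulE dih_invE /= addrAC subrr add0r.
Qed.

Lemma dih_conj_a (s : dihedral k) : s.2 -> s * s ^ a = a ^+ 2.
Proof.
case: s => i [] // _; rewrite /conjg /dih_a expgS expg1 dih_invE !dih_mulE /=.
by congr pair; rewrite opprD opprK opprB addrA addrC addrA addrNK.
Qed.

End DihBasics.

Lemma Zmod_cyclic m : cyclic [set: Zmod m].
Proof. by rewrite /Zmod Zp_cycle cycle_cyclic. Qed.

Lemma card_Zmod m : #|[set: Zmod m]| = (m.-1).+1.
Proof. by rewrite cardsT card_ord. Qed.

Lemma cyclic_isog_Zmod (G : finGroupType) (H : {group G}) m :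
  cyclic H -> #|H| = (m.-1).+1 -> H \isog [set: Zmod m].
Proof. by move=> cH cardH; rewrite isog_cyclic_card // Zmod_cyclic card_Zmod cardH eqxx. Qed.

Lemma dih_mul2 k (u v : dihedral k) : (u * v).2 = u.2 (+) v.2.
Proof. by case: u v => i b [j c]. Qed.
Lemma dih_inv2 k (u : dihedral k) : (u^-1).2 = u.2.
Proof. by case: u => i b. Qed.

From mathcomp Require Import zify.

Lemma dih_classify (k : nat) (KX L : {group dihedral k}) :
  (forall u v, u \in KX -> u ^ v \in KX) -> KX :&: L = 1 ->
  (#|KX| * #|L|)%N = ((k.-1).+1).*2 -> 1 < #|KX| -> 1 < #|L| ->
  (exists m, [/\ m %| (k.-1).+1, coprime m ((k.-1).+1 %/ m),
     KX \isog [set: Zmod m] & L \isog [set: dihedral ((k.-1).+1 %/ m)]]) \/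
  [/\ 2 %| (k.-1).+1, KX \isog [set: dihedral ((k.-1).+1 %/ 2)] & L \isog [set: Zmod 2]].
Proof.
set K := (k.-1).+1 => nKX tiKL cKL gtKX gtL.
have K0 : 0 < K by [].
set a := dih_a k.
have cR : #|<[a]>| = K by rewrite -orderE order_dih_a.
have inR u : (u \in <[a]>) = ~~ u.2 by rewrite -dih_rotE inE.
have cT : #|[set: dihedral k]| = K.*2 by rewrite cardsT card_prod card_ord card_bool muln2.
case: (boolP (KX \subset <[a]>)) => [sKR | nsKR].
- left.
  have cycKX : cyclic KX := cyclicS sKR (cycle_cyclic a).
  set m := #|KX|.
  have m0 : 0 < m by apply: cardG_gt0.
  have mK : m %| K by rewrite -cR cardSg.
  have [s sL s2] : exists2 s, s \in L & s.2.
    case: (boolP (L \subset <[a]>)) => [sLR|].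
      have : #|KX * L| <= K by rewrite -cR subset_leq_card // mul_subG.
      rewrite TI_cardMg // cKL; lia.
    by case/subsetPn => s sL; rewrite inR negbK => s2; exists s.
  set L0 := (L :&: <[a]>)%G.
  have LR : L * <[a]> = setT.
    apply/setP => u; rewrite inE; case: (boolP u.2) => u2.
      have -> : u = s * (s^-1 * u) by rewrite mulKVg.
      by rewrite mem_mulg // inR dih_mul2 dih_inv2 s2 u2.
    by rewrite -[u]mul1g mem_mulg // inR.
  have cL : #|L| = (#|L0|).*2.
    have := mul_cardG L <[a]>; rewrite LR cT cR; rewrite /L0 /=; nia.
  set d := #|L0|.
  have md : (m * d)%N = K by nia.
  have d0 : 0 < d by apply: cardG_gt0.
  have Kd : K %/ m = d by rewrite -md mulKn.
  have copr : coprime m d.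
    apply/negPn/negP => nc.
    have g1 : 1 < gcdn m d.
      by move: nc; rewrite /coprime; have := gcdn_gt0 m d; rewrite m0 /=; lia.
    have pp := pdiv_prime g1.
    have pm := dvdn_trans (pdiv_dvd (gcdn m d)) (dvdn_gcdl m d).
    have pd := dvdn_trans (pdiv_dvd (gcdn m d)) (dvdn_gcdr m d).
    have [x xK ox] := Cauchy pp pm.
    have [y yL oy] := Cauchy pp pd.
    have yR : y \in <[a]> by move: yL; rewrite inE => /andP[].
    have yL' : y \in L by move: yL; rewrite inE => /andP[].
    have : <[x]> == <[y]> :> {set _}.
      rewrite (eq_subG_cyclic (cycle_cyclic a)) ?cycle_subG ?yR ?(subsetP sKR) //.
      by rewrite -!orderE ox oy.
    move/eqP => exy.
    have xL : x \in L by rewrite -cycle_subG exy cycle_subG.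
    have : x \in KX :&: L by rewrite inE xK xL.
    rewrite tiKL inE => /eqP x1.
    by move: ox; rewrite x1 order1 => p1; move: pp; rewrite -p1.
  exists m; split => //; first by rewrite Kd.
    by apply: cyclic_isog_Zmod => //; rewrite prednK.
  rewrite Kd isog_sym.
  have cycL0 : cyclic L0 := cyclicS (subsetIr _ _) (cycle_cyclic a).
  case/cyclicP: cycL0 => r defL0.
  have rL0 : r \in L0 by rewrite defL0 cycle_id.
  have rL : r \in L by move: rL0; rewrite inE => /andP[].
  have rR : r \in <[a]> by move: rL0; rewrite inE => /andP[].
  apply: (@dih_isog _ _ _ r s) => //.
  - by rewrite prednK // orderE -defL0.
  - exact: dih_refl_inv.
  - by apply: dih_refl_conj => //; rewrite -inR.
  - by rewrite -defL0 inE inR s2 andbF.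
  - by rewrite prednK // cL.
- right.
  case/subsetPn: nsKR => s sKX; rewrite inR negbK => s2.
  have a2K : a ^+ 2 \in KX by rewrite -(dih_conj_a _ _ s2) groupM // nKX.
  have ltKX : #|KX| <= K by nia.
  have sub : <[a ^+ 2]> \subset KX by rewrite cycle_subG.
  have a2R : <[a ^+ 2]> \subset <[a]> by apply: cycleX.
  have ne : #|KX| != #|<[a ^+ 2]>|.
    apply/negP => /eqP E.
    have : <[a ^+ 2]> == KX :> {set _} by rewrite eqEcard sub E leqnn.
    move/eqP => E2; move: sKX; rewrite -E2 => /(subsetP a2R).
    by rewrite inR s2.
  have dv : #|<[a ^+ 2]>| %| #|KX| := cardSg sub.
  have oa2 : #|<[a ^+ 2]>| = K %/ gcdn K 2 by rewrite -orderE orderXgcd order_dih_a.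
  case: (boolP (2 %| K)) => [eK | oK].
  + have g2 : gcdn K 2 = 2 by rewrite gcdnC; apply/gcdn_idPl.
    rewrite g2 in oa2.
    set h := K %/ 2 in oa2 *.
    have Kh : K = (h * 2)%N by rewrite divnK.
    have h0 : 0 < h by lia.
    case/dvdnP: dv => q hq; rewrite oa2 in hq ne.
    have cKX : #|KX| = K.
      move: ne; rewrite hq; rewrite Kh hq in ltKX.
      move=> ne.
      have q2 : q <= 2 by rewrite -(leq_pmul2r h0) [(2 * h)%N]mulnC.
      have q1 : q != 1%N by apply: contra ne => /eqP ->; rewrite mul1n.
      have q0 : 0 < q by rewrite lt0n; apply: contraTneq gtKX => q0; rewrite hq q0 mul0n.
      have -> : q = 2%N by lia.
      by rewrite Kh mulnC.
    have cL2 : #|L| = 2%N by move: cKL; rewrite cKX; nia.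
    split => //.
      rewrite isog_sym; apply: (@dih_isog _ _ _ (a ^+ 2) s) => //.
      * by rewrite prednK // -oa2 orderE.
      * exact: dih_refl_inv.
      * by apply: dih_refl_conj => //; rewrite -inR mem_cycle.
      * by apply/negP => /(subsetP a2R); rewrite inR s2.
      * by rewrite prednK // cKX Kh muln2.
    by apply: cyclic_isog_Zmod => //; apply: prime_cyclic; rewrite cL2.
  + have g1 : gcdn K 2 = 1%N.
      by apply/eqP; rewrite -/(coprime K 2) coprime_sym prime_coprime.
    rewrite g1 divn1 in oa2.
    case/dvdnP: dv => q hq; rewrite oa2 in hq ne.
    exfalso; move: ne; rewrite hq; rewrite hq in ltKX gtKX => ne.
    have q1 : q <= 1 by rewrite -(leq_pmul2r K0) mul1n.
    have q0 : 0 < q by rewrite lt0n; apply: contraTneq gtKX => q0; rewrite q0 mul0n.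
    have q1' : q = 1%N by lia.
    by move: ne; rewrite q1' mul1n eqxx.
Qed.

Section SdBasics.
Variables (N H : finGroupType) (phi : sdaction N H).
Lemma sd_mulE (x1 x2 : N) (h1 h2 : H) :
  ((x1, h1) : semidirect phi) * (x2, h2) = (x1 * phi h1 x2, h1 * h2).
Proof. by []. Qed.
Lemma sd_oneE : (1 : semidirect phi) = (1, 1).
Proof. by []. Qed.
Lemma sd_invE (x : N) (h : H) : ((x, h) : semidirect phi)^-1 = (phi h^-1 x^-1, h^-1).
Proof. by []. Qed.
Lemma sd_X2 (u : semidirect phi) j : (u ^+ j).2 = u.2 ^+ j.
Proof. by elim: j => [|j IH] //; rewrite !expgSr -IH; case: (u ^+ j) => ? ?; case: u {IH} => ? ?. Qed.
Lemma sd_card : #|[set: semidirect phi]| = (#|N| * #|H|)%N.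
Proof. by rewrite cardsT card_prod. Qed.
End SdBasics.

Lemma order_charac (G : finGroupType) (r : G) N :
  (forall j, (r ^+ j == 1) = (N %| j)) -> #[r] = N.
Proof.
move=> H; apply/eqP; rewrite eqn_dvd order_dvdn H dvdnn /= -H expg_order eqxx //.
Qed.

Lemma Zmod_mulC m (x y : Zmod m) : x * y = y * x.
Proof. exact: Zp_addC. Qed.

Lemma ZX1 p j : ((Zp1 : 'I_p.+1) ^+ j == 1) = (p.+1 %| j).
Proof. by rewrite -order_dvdn order_Zp1. Qed.

Section Part1.
Variables (m d : nat).
Definition act1 (u : dihedral d) (z : Zmod m) : Zmod m := if u.2 then z^-1 else z.
Lemma act1_morph u : {morph act1 u : x y / x * y}.
Proof. by move=> x y; rewrite /act1; case: u.2; rewrite // invMg Zmod_mulC. Qed.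
Lemma act1_bij u : bijective (act1 u).
Proof. by exists (act1 u) => z; rewrite /act1; case: u.2; rewrite ?invgK. Qed.
Lemma act1_mul u v z : act1 (u * v) z = act1 u (act1 v z).
Proof. by rewrite /act1 dih_mul2; case: u.2; case: v.2; rewrite ?invgK. Qed.
Definition phi1 := SdAction act1_morph act1_bij act1_mul.
End Part1.

Lemma part1 n m : 0 < n -> 0 < m -> m %| n -> coprime m (n %/ m) ->
  exists phi : sdaction (Zmod m) (dihedral (n %/ m)),
       [/\ phi (dih_a (n %/ m)) Zp1 = Zp1,
           phi (dih_x (n %/ m)) Zp1 = Zp_opp Zp1
         & [set: dihedral n] \isog [set: semidirect phi]].
Proof.
move=> n0 m0 mn cop; set d := n %/ m.
have d0 : 0 < d by rewrite divn_gt0 // dvdn_leq.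
have nmd : n = (m * d)%N by rewrite /d mulnC divnK.
exists (phi1 m d); split => //.
set S := semidirect (phi1 m d).
pose r : S := (Zp1, dih_a d).
pose s : S := (1, dih_x d).
have rX j : r ^+ j = (Zp1 ^+ j, dih_a d ^+ j).
  elim: j => [|j IH] //; rewrite expgSr IH /r sd_mulE /=.
  have h : (dih_a d ^+ j).2 = false by rewrite dih_aX.
  by rewrite /act1 h -!expgSr.
have ord : #[r] = (n.-1).+1.
  rewrite prednK //; apply: order_charac => j.
  by rewrite rX sd_oneE xpair_eqE ZX1 dih_aX1 !prednK // nmd Gauss_dvd.
apply: (@dih_isog _ _ n r s) => //.
- by rewrite /s sd_mulE sd_oneE /= /act1 /= invg1 mulg1 dih_refl_inv.
- rewrite /s /r !sd_mulE sd_invE /= /act1 /=.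
  have h : ((dih_a d)^-1).2 = false by [].
  by rewrite invg1 !mulg1 mul1g dih_refl_conj.
- by rewrite inE.
- by rewrite inE.
- apply/cycleP => -[j]; rewrite rX /s => /(congr1 snd)/(congr1 snd) /=.
  by rewrite dih_aX.
- rewrite sd_card card_ord card_prod card_ord card_bool !prednK //. by rewrite nmd -muln2 mulnA.
Qed.

Section Part2.
Variable h : nat.
Definition sig2 (u : dihedral h) : dihedral h :=
  ((if u.2 then Zp1 - u.1 else - u.1)%R, u.2).
Lemma sig2_morph : {morph sig2 : x y / x * y}.
Proof.
move=> [i b] [j c]; rewrite /sig2 !dih_mulE /=; congr pair.
case: b; case: c => /=.
all: rewrite ?opprD ?opprK ?opprB ?addrA.
all: try by [].
all: try by rewrite (addrAC Zp1) subrr add0r.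
all: try by rewrite addrAC.
all: try by rewrite (addrAC _ (- Zp1)%R) addrAC subrr add0r.
all: try by rewrite (addrAC Zp1 (- Zp1)%R) subrr add0r.
all: by rewrite (addrC (- i)%R).
Qed.
Lemma sig2K : involutive sig2.
Proof.
move=> [i b]; rewrite /sig2 /=; congr pair; case: b => //.
  by rewrite opprB addrC subrK.
by rewrite opprK.
Qed.
Definition act2 (t : Zmod 2) (u : dihedral h) : dihedral h :=
  if val t == 1%N then sig2 u else u.
Lemma act2_morph t : {morph act2 t : x y / x * y}.
Proof. by move=> x y; rewrite /act2; case: (val t == 1%N); rewrite // sig2_morph. Qed.
Lemma act2_bij t : bijective (act2 t).
Proof. by exists (act2 t) => z; rewrite /act2; case: (val t == 1%N); rewrite ?sig2K. Qed.
Lemma act2_mul t1 t2 z : act2 (t1 * t2) z = act2 t1 (act2 t2 z).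
Proof.
rewrite /act2; case: t1 => -[|[|//]] ?; case: t2 => -[|[|//]] ? //=.
by rewrite sig2K.
Qed.
Definition phi2 := SdAction act2_morph act2_bij act2_mul.
End Part2.

Lemma part2 n : 0 < n -> 2 %| n ->
     exists phi : sdaction (dihedral (n %/ 2)) (Zmod 2),
       [/\ phi Zp1 (dih_a (n %/ 2)) = (dih_a (n %/ 2))^-1,
           phi Zp1 (dih_x (n %/ 2)) = dih_a (n %/ 2) * dih_x (n %/ 2)
         & [set: dihedral n] \isog [set: semidirect phi]].
Proof.
move=> n0 en; set h := n %/ 2.
have nh : n = (h * 2)%N by rewrite /h divnK.
have h0 : 0 < h by lia.
exists (phi2 h); split.
- by [].
- by rewrite /= /act2 /= /sig2 /= dih_mulE /= subr0 addr0.
set S := semidirect (phi2 h).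
pose r : S := ((Zp1, true), Zp1).
pose s : S := ((0%R, true), 1).
have r2 : r ^+ 2 = (dih_a h, 1).
  rewrite expgS expg1 /r sd_mulE /= /act2 /= /sig2 /= dih_mulE /=.
  by rewrite subrr subr0; congr pair; apply/val_inj.
have u1X (u : dihedral h) q : ((u, 1) : S) ^+ q = (u ^+ q, 1).
  elim: q => [|q IH] //; rewrite !expgSr IH sd_mulE sdact1g mulg1.
  by congr pair.
have rX q : r ^+ (2 * q) = (dih_a h ^+ q, 1) by rewrite expgM r2 u1X.
have rXe j : r ^+ j = 1 -> 2 %| j.
  move/(congr1 snd); rewrite sd_X2 => /eqP.
  by rewrite ZX1.
have ord : #[r] = (n.-1).+1.
  rewrite prednK //; apply: order_charac => j.
  case: (boolP (2 %| j)) => [ej | oj].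
    rewrite -(divnK ej) mulnC rX sd_oneE xpair_eqE eqxx andbT dih_aX1 prednK //.
    by rewrite nh mulnC dvdn_pmul2l.
  apply/idP/idP => [/eqP/rXe|nj]; first by rewrite (negbTE oj).
  by move: oj; rewrite (dvdn_trans en nj).
apply: (@dih_isog _ _ n r s) => //.
- rewrite /s sd_mulE sd_oneE /= /act2 /=. by rewrite dih_refl_inv // mulg1.
- rewrite /s /r !sd_mulE sd_invE /= /act2 /= /sig2 /= !dih_mulE /=.
  congr pair; last by apply/val_inj.
  by rewrite sub0r subr0 addNr subrr.
- by rewrite inE.
- by rewrite inE.
- apply/cycleP => -[j] sr.
  have : (r ^+ j).2 == 1 by rewrite -sr.
  rewrite sd_X2 ZX1 => ej.
  move: sr; rewrite -(divnK ej) mulnC rX => /(congr1 fst)/(congr1 snd) /=.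
  by rewrite dih_aX.
- rewrite sd_card card_ord card_prod card_ord card_bool. by rewrite !prednK // nh muln2.
Qed.

Lemma prod_mulE (A B : finGroupType) (x1 x2 : A) (y1 y2 : B) :
  ((x1, y1) : (A * B)%type) * (x2, y2) = (x1 * x2, y1 * y2).
Proof. by []. Qed.
Lemma prod_oneE (A B : finGroupType) : (1 : (A * B)%type) = (1, 1).
Proof. by []. Qed.
Lemma prod_invE (A B : finGroupType) (x : A) (y : B) :
  ((x, y) : (A * B)%type)^-1 = (x^-1, y^-1).
Proof. by []. Qed.

Lemma part3 n : 0 < n -> 2 %| n -> ~~ (4 %| n) ->
     [set: dihedral n] \isog [set: (dihedral (n %/ 2) * Zmod 2)%type].
Proof.
move=> n0 en n4; set h := n %/ 2.
have nh : n = (h * 2)%N by rewrite /h divnK.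
have h0 : 0 < h by lia.
have oh : ~~ (2 %| h).
  apply: contra n4 => e2; rewrite nh -(divnK e2) -mulnA.
  by apply: dvdn_mull.
set P := (dihedral h * Zmod 2)%type.
pose r : P := (dih_a h, Zp1).
pose s : P := (dih_x h, 1).
have rX j : r ^+ j = (dih_a h ^+ j, Zp1 ^+ j).
  by elim: j => [|j IH] //; rewrite !expgSr IH prod_mulE.
have ord : #[r] = (n.-1).+1.
  rewrite prednK //; apply: order_charac => j.
  rewrite rX prod_oneE xpair_eqE dih_aX1 ZX1 prednK // nh Gauss_dvd //.
  by rewrite coprime_sym prime_coprime.
apply: (@dih_isog _ _ n r s) => //.
- by rewrite /s prod_mulE prod_oneE dih_refl_inv // mulg1.
- rewrite /s /r !prod_mulE prod_invE; congr pair; first by rewrite dih_refl_conj.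
  by apply/val_inj.
- by rewrite inE.
- by rewrite inE.
- apply/cycleP => -[j]; rewrite rX /s => /(congr1 fst)/(congr1 snd) /=.
  by rewrite dih_aX.
- rewrite cardsT card_prod card_prod !card_ord card_bool. by rewrite !prednK // nh muln2.
Qed.

Lemma part4 n (X Y : finGroupType) (phi : sdaction X Y) : 0 < n ->
     1 < #|X| -> 1 < #|Y| ->
     [set: dihedral n] \isog [set: semidirect phi] ->
     (exists m : nat,
        [/\ m %| n, coprime m (n %/ m),
            [set: X] \isog [set: Zmod m]
          & [set: Y] \isog [set: dihedral (n %/ m)]])
     \/
     [/\ 2 %| n, [set: X] \isog [set: dihedral (n %/ 2)]
       & [set: Y] \isog [set: Zmod 2]].
Proof.
move=> n0 gX gY iso.
have cS : #|[set: semidirect phi]| = ((n.-1).+1).*2.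
  by rewrite -(card_isog iso) cardsT card_prod card_ord card_bool muln2.
rewrite isog_sym in iso; case/isogP: iso => f injf imf.
have finj : {in [set: semidirect phi] &, injective f} by apply/injmP.
have jXM : {in [set: X] &, {morph (fun x => f (x, 1)) : x y / x * y}}.
  move=> x y _ _ /=; rewrite -morphM ?inE //.
  by rewrite sd_mulE sdact1g mulg1.
have jYM : {in [set: Y] &, {morph (fun y => f (1, y)) : x y / x * y}}.
  move=> x y _ _ /=; rewrite -morphM ?inE //.
  by rewrite sd_mulE sdact_1 mulg1.
set jX := Morphism jXM; set jY := Morphism jYM.
have injX : 'injm jX.
  by apply/injmP => x y _ _ /= /finj; rewrite !inE => /(_ isT isT) [].
have injY : 'injm jY.
  by apply/injmP => x y _ _ /= /finj; rewrite !inE => /(_ isT isT) [].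
have isX : [set: X] \isog jX @* setT by apply: sub_isog.
have isY : [set: Y] \isog jY @* setT by apply: sub_isog.
have cl := @dih_classify n (jX @* setT)%G (jY @* setT)%G.
case: cl.
- move=> u v /morphimP [x _ _ ->].
  have : v \in f @* setT by rewrite imf inE.
  case/morphimP => w _ _ ->.
  rewrite /= -morphJ ?inE //.
  match goal with |- context [@conjg ?G ?t w] =>
    have E2 : (@conjg G t w).2 = 1; [ | generalize (@conjg G t w) E2; case => z1 z2 /= -> ] end.
    by case: w => w1 w2; rewrite /conjg sd_invE !sd_mulE /= mul1g mulVg.
  by apply: (mem_morphim jX); rewrite inE.
- apply/trivgP/subsetP => u /setIP [/morphimP [x _ _ ->] /morphimP [y _ _ e]].
  move: e => /= /finj; rewrite !inE => /(_ isT isT) [-> _].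
  by rewrite -sd_oneE morph1.
- rewrite !card_injm // !cardsT.
  by rewrite -cS sd_card.
- by rewrite card_injm // cardsT.
- by rewrite card_injm // cardsT.
- rewrite prednK // => -[m [mn cop iX iY]]; left; exists m; split => //.
    exact: isog_trans isX iX.
  exact: isog_trans isY iY.
- rewrite prednK // => -[en iX iY]; right; split => //.
    exact: isog_trans isX iX.
  exact: isog_trans isY iY.
Qed.

Theorem mainTheorem4 (n : nat) (n_gt0 : 0 < n) :
  (* (1) *)
  (forall m : nat, 0 < m -> m %| n -> coprime m (n %/ m) ->
     exists phi : sdaction (Zmod m) (dihedral (n %/ m)),
       [/\ phi (dih_a (n %/ m)) Zp1 = Zp1,
           phi (dih_x (n %/ m)) Zp1 = Zp_opp Zp1
         & [set: dihedral n] \isog [set: semidirect phi]])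
  /\
  (* (2) *)
  (2 %| n ->
     exists phi : sdaction (dihedral (n %/ 2)) (Zmod 2),
       [/\ phi Zp1 (dih_a (n %/ 2)) = (dih_a (n %/ 2))^-1,
           phi Zp1 (dih_x (n %/ 2)) = dih_a (n %/ 2) * dih_x (n %/ 2)
         & [set: dihedral n] \isog [set: semidirect phi]])
  /\
  (* (3) *)
  (2 %| n -> ~~ (4 %| n) ->
     [set: dihedral n] \isog [set: (dihedral (n %/ 2) * Zmod 2)%type])
  /\
  (* (4) *)
  (forall (X Y : finGroupType) (phi : sdaction X Y),
     1 < #|X| -> 1 < #|Y| ->
     [set: dihedral n] \isog [set: semidirect phi] ->
     (exists m : nat,
        [/\ m %| n, coprime m (n %/ m),
            [set: X] \isog [set: Zmod m]
          & [set: Y] \isog [set: dihedral (n %/ m)]])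
     \/
     [/\ 2 %| n, [set: X] \isog [set: dihedral (n %/ 2)]
       & [set: Y] \isog [set: Zmod 2]]).
Proof.
split; first by move=> m m0 mn cop; exact: part1.
split; first by move=> en; exact: (part2 n n_gt0 en).
split; first by move=> en n4; exact: part3.
by move=> X Y phi gX gY iso; exact: (@part4 n X Y phi n_gt0 gX gY iso).
Qed.
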